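(* Fix an integer $k\ge 2$. Then \[ \lim_{r\to\infty}\gamma^{B}_{k,r}=\gamma^{B}_{k}\qquad\text{and}\qquad \lim_{r\to\infty}\gamma_{k,r}=\gamma_{k}, \] where the quantities are as defined in the context (in particular, both limits over $r$ exist).
   Context: Let $\Sigma=\{0,1,\dots,k-1\}$. For strings $u=u_1\cdots u_n$, $v=v_1\cdots v_n\in\Sigma^n$, let $\mathbf{L}(u,v)$ be the length of a longest common subsequence of $u$ and $v$, i.e. the largest $m$ such that there are indices $1\le i_1<\dots<i_m\le n$ and $1\le j_1<\dots<j_m\le n$ with $u_{i_a}=v_{j_a}$ for all $a$. For an integer $r\ge 1$, let $\mathbf{L}_r(u,v)$ be the largest such $m$ subject to the additional requirement $|i_a-j_a|\le r$ for all $a$. Let $\mathbf{EL}^{(k)}_n=k^{-2n}\sum_{u,v\in\Sigma^n}\mathbf{L}(u,v)$ and $\mathbf{EL}_{n,k,r}=k^{-2n}\sum_{u,v\in\Sigma^n}\mathbf{L}_r(u,v)$. Bernoulli Matching model: let $(\epsilon_{ij})_{i,j\ge1}$ be independent random variables with $\Pr(\epsilon_{ij}=1)=1/k$, $\Pr(\epsilon_{ij}=0)=1-1/k$. Let $\mathbf{D}_{n}$ be the largest $m$ such that there are $1\le i_1<\dots<i_m\le n$, $1\le j_1<\dots<j_m\le n$ with $\epsilon_{i_aj_a}=1$ for all $a$, and let $\mathbf{R}_{n,r}$ be the largest such $m$ with the additional requirement $|i_a-j_a|\le r$ for all $a$. Let $\mathbf{EL}^{B(k)}_n=\mathbb{E}\,\mathbf{D}_n$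 and $\mathbf{EL}^{B}_{n,k,r}=\mathbb{E}\,\mathbf{R}_{n,r}$. All four sequences are superadditive in $n$, so the limits $\gamma_k=\lim_n \mathbf{EL}^{(k)}_n/n$, $\gamma_{k,r}=\lim_n\mathbf{EL}_{n,k,r}/n$, $\gamma^B_k=\lim_n\mathbf{EL}^{B(k)}_n/n$, $\gamma^B_{k,r}=\lim_n\mathbf{EL}^B_{n,k,r}/n$ exist. *)

(* Defs.v *)
From HB Require Import structures.
From mathcomp Require Import all_boot all_order all_algebra.
From mathcomp Require Import all_classical all_reals all_analysis.
Set Implicit Arguments. Unset Strict Implicit. Unset Printing Implicit Defensive.
Import Order.TTheory GRing.Theory Num.Theory.
Import numFieldNormedType.Exports.
Local Open Scope ring_scope.

(* Listing a chain
   in increasing order gives exactly index sequences i_1<..<i_m, j_1<..<j_m. *)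
Definition chainb (n : nat) (s : {set 'I_n * 'I_n}) : bool :=
  [forall p in s, forall q in s,
     [|| p == q, ((p.1 < q.1)%N && (p.2 < q.2)%N) | ((q.1 < p.1)%N && (q.2 < p.2)%N)]].

Definition LCSgen (n : nat) (M : 'I_n -> 'I_n -> bool) (ok : nat -> nat -> bool) : nat :=
  \max_(s : {set 'I_n * 'I_n} | chainb s && [forall p in s, M p.1 p.2 && ok p.1 p.2]) #|s|.

Definition band (r : nat) (i j : nat) : bool := ((i <= j + r) && (j <= i + r))%N.

Definition LCS (k n : nat) (u v : {ffun 'I_n -> 'I_k}) : nat :=
  LCSgen (fun i j => u i == v j) (fun _ _ => true).
Definition LCSr (k n r : nat) (u v : {ffun 'I_n -> 'I_k}) : nat :=
  LCSgen (fun i j => u i == v j) (band r).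

(* Bernoulli matching: eps restricted to [1,n]x[1,n] *)
Definition Dn (n : nat) (eps : {ffun 'I_n * 'I_n -> bool}) : nat :=
  LCSgen (fun i j => eps (i, j)) (fun _ _ => true).
Definition Rnr (n r : nat) (eps : {ffun 'I_n * 'I_n -> bool}) : nat :=
  LCSgen (fun i j => eps (i, j)) (band r).

Section Expect.
Variable R : realType.

Definition EL (k n : nat) : R :=
  ((k ^ (2 * n))%:R)^-1 * \sum_(u : {ffun 'I_n -> 'I_k}) \sum_(v : {ffun 'I_n -> 'I_k}) (LCS u v)%:R.
Definition ELr (k n r : nat) : R :=
  ((k ^ (2 * n))%:R)^-1 * \sum_(u : {ffun 'I_n -> 'I_k}) \sum_(v : {ffun 'I_n -> 'I_k}) (LCSr r u v)%:R.

Definition bprob (k n : nat) (eps : {ffun 'I_n * 'I_n -> bool}) : R :=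
  \prod_(p : 'I_n * 'I_n) (if eps p then (k%:R)^-1 else 1 - (k%:R)^-1).

Definition ELB (k n : nat) : R :=
  \sum_(eps : {ffun 'I_n * 'I_n -> bool}) bprob k eps * (Dn eps)%:R.
Definition ELBr (k n r : nat) : R :=
  \sum_(eps : {ffun 'I_n * 'I_n -> bool}) bprob k eps * (Rnr r eps)%:R.

Definition gamma (k : nat) : R := limn (fun n => EL k n / n%:R).
Definition gamma_r (k r : nat) : R := limn (fun n => ELr k n r / n%:R).
Definition gammaB (k : nat) : R := limn (fun n => ELB k n / n%:R).
Definition gammaB_r (k r : nat) : R := limn (fun n => ELBr k n r / n%:R).
End Expect.

(* Main.v *)
Require Import Defs.
From HB Require Import structures.
From mathcomp Require Import all_boot all_order all_algebra.
From mathcomp Require Import all_classical all_reals all_analysis.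
Import Order.TTheory GRing.Theory Num.Theory.
Import numFieldNormedType.Exports.
Local Open Scope classical_set_scope.
Local Open Scope ring_scope.
Set Implicit Arguments. Unset Strict Implicit. Unset Printing Implicit Defensive.
From mathcomp Require Import zify.
Local Open Scope nat_scope.

Lemma chainP n (s : {set 'I_n * 'I_n}) : chainb s -> forall p q, p \in s -> q \in s ->
  [|| p == q, ((p.1 < q.1) && (p.2 < q.2)) | ((q.1 < p.1) && (q.2 < p.2))].
Proof. move=> /forall_inP H p q ps qs. exact: (forall_inP (H p ps) q qs). Qed.

Lemma chainI n (s : {set 'I_n * 'I_n}) : (forall p q, p \in s -> q \in s ->
  [|| p == q, ((p.1 < q.1) && (p.2 < q.2)) | ((q.1 < p.1) && (q.2 < p.2))]) -> chainb s.
Proof. by move=> H; apply/forall_inP => p ps; apply/forall_inP => q qs; apply: H. Qed.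

Lemma LCSgen_le_n n M ok : LCSgen (n:=n) M ok <= n.
Proof.
apply/bigmax_leqP => s /andP[ch _].
have inj : {in s &, injective (fun p : 'I_n * 'I_n => p.1)}.
  move=> p q ps qs e; case/or3P: (chainP ch ps qs) => [/eqP //|/andP[h _]|/andP[h _]];
  by move: h; rewrite e ltnn.
rewrite -(card_in_imset inj); apply: leq_trans (max_card _) _.
by rewrite card_ord.
Qed.

Lemma LCSgen_mono n M (ok ok' : nat -> nat -> bool) :
  (forall i j, ok i j -> ok' i j) -> LCSgen (n:=n) M ok <= LCSgen M ok'.
Proof.
move=> H; apply/bigmax_leqP => s /andP[ch /forall_inP Hs].
apply: leq_bigmax_cond; rewrite ch /=; apply/forall_inP => p ps.
by case/andP: (Hs p ps) => -> /H.
Qed.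

Lemma LCSgen_eq_ok n M (ok ok' : nat -> nat -> bool) :
  (forall i j : 'I_n, ok i j = ok' i j) -> LCSgen (n:=n) M ok = LCSgen M ok'.
Proof.
move=> H; apply: eq_bigl => s; congr (_ && _); apply: eq_forallb => p.
by rewrite H.
Qed.

Lemma LCSgen_eqM n (M M' : 'I_n -> 'I_n -> bool) ok :
  (forall i j, M i j = M' i j) -> LCSgen M ok = LCSgen M' ok.
Proof.
move=> H; apply: eq_bigl => s; congr (_ && _); apply: eq_forallb => p.
by rewrite H.
Qed.

Lemma bigmax_attained (I : finType) (P : pred I) (F : I -> nat) i0 :
  P i0 -> exists2 i, P i & \max_(j | P j) F j = F i.
Proof.
move=> Pi0; exists [arg max_(i > i0 | P i) F i]; last exact: bigop.bigmax_eq_arg.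
by case: arg_maxnP.
Qed.

Lemma LCSgen_attained n (M : 'I_n -> 'I_n -> bool) (ok : nat -> nat -> bool) :
  exists2 s : {set 'I_n * 'I_n}, chainb s && [forall p in s, M p.1 p.2 && ok p.1 p.2]
     & LCSgen M ok = #|s|.
Proof.
apply: (@bigmax_attained _ (fun s : {set 'I_n * 'I_n} => chainb s && [forall p in s, M p.1 p.2 && ok p.1 p.2]) (fun s => #|s|) finset.set0).
by apply/andP; split; [apply: chainI|apply/forall_inP] => p; rewrite inE.
Qed.

Lemma LCSgen_add m n (M : 'I_(m+n) -> 'I_(m+n) -> bool) (ok : nat -> nat -> bool)
  (okS : forall i j, ok (m + i) (m + j) = ok i j) :
  LCSgen (fun i j : 'I_m => M (lshift n i) (lshift n j)) ok +
  LCSgen (fun i j : 'I_n => M (rshift m i) (rshift m j)) ok <= LCSgen M ok.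
Proof.
have [s1 /andP[ch1 /forall_inP H1] ->] := LCSgen_attained (fun i j : 'I_m => M (lshift n i) (lshift n j)) ok.
have [s2 /andP[ch2 /forall_inP H2] ->] := LCSgen_attained (fun i j : 'I_n => M (rshift m i) (rshift m j)) ok.
pose f1 := fun p : 'I_m * 'I_m => (lshift n p.1, lshift n p.2).
pose f2 := fun p : 'I_n * 'I_n => (rshift m p.1, rshift m p.2).
have inj1 : injective f1.
  by move=> [a b] [c d] [e1 e2]; congr pair; apply/val_inj; move: e1 e2 => /=; lia.
have inj2 : injective f2.
  by move=> [a b] [c d] [e1 e2]; congr pair; apply/val_inj; move: e1 e2 => /=; lia.
set s := f1 @: s1 :|: f2 @: s2.
have cs : #|s| = #|s1| + #|s2|.
  rewrite cardsU !card_imset //.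
  suff -> : f1 @: s1 :&: f2 @: s2 = finset.set0 by rewrite cards0 subn0.
  apply/setP => p; rewrite !inE; apply/negbTE; apply/negP.
  case/andP => /imsetP[x _ ->] /imsetP[y _ [e _]].
  have h := ltn_ord x.1; rewrite e in h; by rewrite ltnNge leq_addr in h.
rewrite -cs /LCSgen; apply: leq_bigmax_cond; apply/andP; split.
  apply: chainI => p q; rewrite !inE.
  case/orP => /imsetP[x xs ->]; case/orP => /imsetP[y ys ->].
  - case/or3P: (chainP ch1 xs ys) => [/eqP->|h|h]; first by rewrite eqxx.
      by rewrite /= h orbT.
    by rewrite /= h !orbT.
  - apply/or3P; apply: Or32 => /=; by rewrite !ltn_addr.
  - apply/or3P; apply: Or33 => /=; by rewrite !ltn_addr.
  - case/or3P: (chainP ch2 xs ys) => [/eqP->|h|h]; first by rewrite eqxx.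
      by apply/or3P; apply: Or32 => /=; rewrite !ltn_add2l.
    by apply/or3P; apply: Or33 => /=; rewrite !ltn_add2l.
apply/forall_inP => p; rewrite inE.
case/orP => /imsetP[x xs ->].
  exact: H1.
by rewrite /= okS; apply: H2.
Qed.
Local Open Scope ring_scope.
From mathcomp Require Import lra.

Lemma near_oo (P : nat -> Prop) : (exists N, forall n, (N <= n)%N -> P n) -> \forall n \near \oo, P n.
Proof. case=> N H. exists N => //. Qed.

Lemma supadd_mul (R : realType) (a : nat -> R) :
  (forall m n, a m + a n <= a (m+n)%N) -> a 0%N = 0 -> forall q m, q%:R * a m <= a (q * m)%N.
Proof.
move=> sa a00; elim=> [|q IH] m; first by rewrite mul0r mul0n a00.
rewrite -addn1 natrD mulrDl mul1r mulnDl mul1n; apply: le_trans (sa _ _).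
by rewrite lerD2r.
Qed.

Lemma fekete (R : realType) (a : nat -> R) :
  (forall n, 0 <= a n) -> (forall n, a n <= n%:R) -> (forall m n, a m + a n <= a (m+n)%N) ->
  (forall n, a n / n%:R <= limn (fun n => a n / n%:R)) /\
  (forall e, 0 < e -> exists n, limn (fun n => a n / n%:R) - e < a n / n%:R).
Proof.
move=> a0 an sa.
have a00 : a 0%N = 0 by apply/le_anti; rewrite a0 andbT; have := an 0%N.
set u := fun n => a n / n%:R.
have u0 : forall n, 0 <= u n by move=> n; rewrite /u divr_ge0.
have u1 : forall n, u n <= 1.
  move=> [|n]; first by rewrite /u a00 mul0r.
  by rewrite /u ler_pdivrMr ?ltr0Sn // mul1r.
have hs : has_sup (range u).
  split; first by exists (u 0%N), 0%N.
  by exists 1 => _ [n _ <-].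
set s := sup (range u).
have us : forall n, u n <= s by move=> n; apply: sup_upper_bound => //; exists n.
have key : forall m n, (0 < m)%N -> (0 < n)%N -> u m - m%:R / n%:R <= u n.
  move=> m n m0 n0.
  have nR : (n%:R : R) != 0 by rewrite pnatr_eq0 -lt0n.
  have nRp : (0 : R) < n%:R by rewrite ltr0n.
  have h1 : a n = n%:R * u n by rewrite /u mulrC divfK.
  have h2 : a m = m%:R * u m by rewrite /u mulrC divfK // pnatr_eq0 -lt0n.
  have h3 : (n%/m)%:R * a m <= a n.
    rewrite {2}(divn_eq n m); apply: le_trans (sa _ _).
    by rewrite -[X in X <= _]addr0 lerD ?supadd_mul.
  have h4 : (n%:R : R) <= (n %/ m * m)%:R + m%:R.
    rewrite -natrD ler_nat {1}(divn_eq n m) leq_add2l ltnW //.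
    exact: ltn_pmod.
  have h5 : (n%:R - m%:R) * u m <= n%:R * u n.
    rewrite -h1; apply: le_trans h3; rewrite h2 mulrA -natrM ler_wpM2r //.
    by rewrite lerBlDr.
  rewrite -(ler_pM2l nRp) mulrBr [n%:R * (m%:R / _)]mulrCA mulfV // mulr1; apply: le_trans h5.
  by rewrite mulrBl lerD2l lerN2 ler_piMr.
have cv : u @ \oo --> s.
  apply/cvgrPdist_lt => e e0.
  have e20 : 0 < e / 2 by rewrite divr_gt0.
  have [_ [m _ <-] hm] := sup_adherent e20 hs.
  case: m hm => [|m] hm.
    apply: near_oo; exists 0%N => n _.
    have := u0 n; have := us n; have : u 0%N = 0 by rewrite /u a00 mul0r.
    move=> h0 h1 h2; rewrite -/s in hm; rewrite ger0_norm ?subr_ge0 //; lra.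
  apply: near_oo; exists (Num.Def.archi_bound (m.+1%:R / (e / 2))).+1 => n hn.
  have n0 : (0 < n)%N by apply: leq_trans hn.
  have hk := key _ _ (ltn0Sn m) n0.
  have hb : m.+1%:R / (e / 2) < (n%:R : R).
    apply: lt_le_trans (archi_boundP _) _; first by rewrite divr_ge0 // ltW.
    by rewrite ler_nat ltnW.
  have hb2 : m.+1%:R / n%:R < e / 2.
    by rewrite ltr_pdivrMr ?ltr0n // mulrC -ltr_pdivrMr.
  have := us n; move=> h1; rewrite -/s in hm; rewrite ger0_norm ?subr_ge0 //; lra.
have ls : limn u = s by apply: cvg_lim.
rewrite ls; split => // e e0.
have [_ [m _ <-] hm] := sup_adherent e0 hs.
by exists m.
Qed.
Lemma limit_r (R : realType) (a : nat -> R) (b : nat -> nat -> R) :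
  (forall n, 0 <= a n) -> (forall n, a n <= n%:R) -> (forall m n, a m + a n <= a (m+n)%N) ->
  (forall r n, 0 <= b r n) -> (forall r m n, b r m + b r n <= b r (m+n)%N) ->
  (forall r n, b r n <= a n) -> (forall r n, (n <= r)%N -> b r n = a n) ->
  (fun r => limn (fun n => b r n / n%:R)) @ \oo --> limn (fun n => a n / n%:R).
Proof.
move=> a0 an sa b0 sb ba bra.
have [Fa1 Fa2] := fekete a0 an sa.
have Fb r := fekete (b0 r) (fun n => le_trans (ba r n) (an n)) (sb r).
set L := limn _.
have le1 : forall r, limn (fun n => b r n / n%:R) <= L.
  move=> r; apply/ler_addgt0Pr => e e0.
  have [n hn] := (Fb r).2 e e0.
  have : b r n / n%:R <= L.
    apply: le_trans (Fa1 n); rewrite ler_wpM2r //.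
  move: hn; set x := limn _ => hn h; lra.
apply/cvgrPdist_lt => e e0.
have [m hm] := Fa2 e e0.
apply: near_oo; exists m => r hr.
have h1 := le1 r.
have h2 := (Fb r).1 m.
rewrite bra // in h2.
rewrite -/L in hm; rewrite ger0_norm ?subr_ge0 //; lra.
Qed.
Lemma marg (R : realType) (I J T : finType) (g : J -> I) (ginj : injective g)
  (w : T -> R) (w1 : \sum_t w t = 1) (f : {ffun J -> T} -> R) :
  \sum_(e : {ffun I -> T}) (\prod_i w (e i)) * f [ffun j => e (g j)] =
  \sum_(e' : {ffun J -> T}) (\prod_j w (e' j)) * f e'.
Proof.
pose pk i := [pick j | g j == i].
have pkg : forall j, pk (g j) = Some j.
  move=> j; rewrite /pk; case: pickP => [j' /eqP/ginj -> //|/(_ j)]; by rewrite eqxx.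
have pkS : forall i j, pk i = Some j -> g j = i.
  by move=> i j; rewrite /pk; case: pickP => // j' /eqP <- [<-].
have pkN : forall i, pk i = None -> forall j, g j == i = false.
  by move=> i; rewrite /pk; case: pickP.
transitivity (\sum_(e : {ffun I -> T}) \sum_(e' : {ffun J -> T})
   ([ffun j => e (g j)] == e')%:R * (\prod_i w (e i)) * f e').
  apply: eq_bigr => e _.
  rewrite (bigD1 [ffun j => e (g j)]) //= eqxx mul1r [X in _ = _ + X]big1 ?addr0 // => e' ne.
  by rewrite eq_sym (negbTE ne) !mul0r.
rewrite exchange_big /=; apply: eq_bigr => e' _; rewrite -mulr_suml; congr (_ * _).
pose G i t := (if pk i is Some j then (t == e' j)%:R else 1) * w t.
transitivity (\sum_(e : {ffun I -> T}) \prod_i G i (e i)).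
  apply: eq_bigr => e _; rewrite /G big_split /=; congr (_ * _).
  case: eqP => [<-|ne].
    rewrite big1 // => i _; case E: (pk i) => [j|] //.
    by rewrite -(pkS _ _ E) ffunE eqxx.
  have : ~~ [forall j, e (g j) == e' j].
    apply/negP => /forallP H; apply: ne; apply/ffunP => j; rewrite ffunE; exact/eqP/H.
  case/forallPn => j hj.
  by rewrite (bigD1 (g j)) //= pkg (negbTE hj) mul0r.
rewrite -bigA_distr_bigA /=.
transitivity (\prod_i (if pk i is Some j then w (e' j) else 1)).
  apply: eq_bigr => i _; rewrite /G; case: (pk i) => [j|].
    rewrite (bigD1 (e' j)) //= eqxx mul1r big1 ?addr0 // => t nt.
    by rewrite (negbTE nt) mul0r.
  by under eq_bigr do rewrite mul1r.
rewrite (partition_big g xpredT) //=; apply: eq_bigr => i _.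
case E: (pk i) => [j|].
  rewrite (big_pred1 j) // => j' /=; rewrite -(pkS _ _ E).
  by apply/eqP/eqP => [/ginj|->].
by rewrite big_pred0 // => j'; rewrite pkN.
Qed.
Definition ELg (R : realType) (k n : nat) (ok : nat -> nat -> bool) : R :=
  ((k ^ (2 * n))%:R)^-1 * \sum_(u : {ffun 'I_n -> 'I_k}) \sum_(v : {ffun 'I_n -> 'I_k})
     (LCSgen (fun i j => u i == v j) ok)%:R.
Definition ELBg (R : realType) (k n : nat) (ok : nat -> nat -> bool) : R :=
  \sum_(eps : {ffun 'I_n * 'I_n -> bool}) bprob R k eps * (LCSgen (fun i j => eps (i, j)) ok)%:R.

Lemma sumprod1 (R : realType) (I T : finType) (w : T -> R) :
  \sum_t w t = 1 -> \sum_(e : {ffun I -> T}) \prod_i w (e i) = 1.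
Proof.
move=> w1; transitivity (\prod_(i : I) \sum_t w t); last by rewrite big1.
by rewrite bigA_distr_bigA.
Qed.

Definition wu (R : realType) (k : nat) (t : 'I_k) : R := (k%:R)^-1.
Definition wb (R : realType) (k : nat) (b : bool) : R := if b then (k%:R)^-1 else 1 - (k%:R)^-1.

Lemma wu1 (R : realType) k : (0 < k)%N -> \sum_(t : 'I_k) wu R t = 1.
Proof.
move=> k0; rewrite /wu sumr_const card_ord -[_ *+ k]mulr_natr mulVf //.
by rewrite pnatr_eq0 -lt0n.
Qed.

Lemma wb1 (R : realType) k : \sum_(t : bool) wb R k t = 1.
Proof. by rewrite big_bool /= /wb addrC subrK. Qed.

Lemma wu0 (R : realType) k (t : 'I_k) : 0 <= wu R t.
Proof. by rewrite /wu invr_ge0. Qed.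

Lemma wb0 (R : realType) k t : (0 < k)%N -> 0 <= wb R k t.
Proof.
move=> k0; rewrite /wb; case: t; first by rewrite invr_ge0.
rewrite subr_ge0 invf_le1 ?ltr0n // ?ler1n //.
Qed.

Lemma ELg_alt (R : realType) k n ok : (0 < k)%N ->
  ELg R k n ok = \sum_(u : {ffun 'I_n -> 'I_k}) (\prod_i wu R (u i)) *
     \sum_(v : {ffun 'I_n -> 'I_k}) (\prod_i wu R (v i)) * (LCSgen (fun i j => u i == v j) ok)%:R.
Proof.
move=> k0; rewrite /ELg mulr_sumr; apply: eq_bigr => u _.
rewrite mulr_sumr mulr_sumr; apply: eq_bigr => v _.
rewrite mulrA; congr (_ * _).
rewrite /wu !prodr_const !card_ord mul2n -addnn expnD natrM invfM.
by rewrite natrX exprVn.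
Qed.
Lemma sumD (R : realType) (I : finType) (A B : I -> R) :
  \sum_i A i + \sum_i B i = \sum_i (A i + B i).
Proof. by rewrite big_split. Qed.

Lemma marg2 (R : realType) (k N M : nat) (k0 : (0 < k)%N) (g : 'I_M -> 'I_N) (ginj : injective g)
  (F : {ffun 'I_M -> 'I_k} -> {ffun 'I_M -> 'I_k} -> R) :
  \sum_(u : {ffun 'I_N -> 'I_k}) (\prod_i wu R (u i)) *
     \sum_(v : {ffun 'I_N -> 'I_k}) (\prod_i wu R (v i)) * F [ffun i => u (g i)] [ffun i => v (g i)]
  = \sum_(u : {ffun 'I_M -> 'I_k}) (\prod_i wu R (u i)) *
     \sum_(v : {ffun 'I_M -> 'I_k}) (\prod_i wu R (v i)) * F u v.
Proof.
transitivity (\sum_(u : {ffun 'I_N -> 'I_k}) (\prod_i wu R (u i)) *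
     \sum_(v : {ffun 'I_M -> 'I_k}) (\prod_i wu R (v i)) * F [ffun i => u (g i)] v).
  apply: eq_bigr => u _; congr (_ * _).
  exact: (marg ginj (wu1 R k0) (fun v' => F [ffun i => u (g i)] v')).
exact: (marg ginj (wu1 R k0) (fun u' => \sum_(v : {ffun 'I_M -> 'I_k}) (\prod_i wu R (v i)) * F u' v)).
Qed.

Lemma ELg_super (R : realType) k m n ok (k0 : (0 < k)%N)
  (okS : forall i j, ok (m + i)%N (m + j)%N = ok i j) :
  ELg R k m ok + ELg R k n ok <= ELg R k (m + n) ok.
Proof.
rewrite !ELg_alt //.
rewrite -(marg2 k0 (@lshift_inj m n) (fun u v => (LCSgen (fun i j => u i == v j) ok)%:R)).
rewrite -(marg2 k0 (@rshift_inj m n) (fun u v => (LCSgen (fun i j => u i == v j) ok)%:R)).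
have E : forall (A B : {ffun 'I_(m+n) -> 'I_k} -> R), \sum_u A u + \sum_u B u = \sum_u (A u + B u).
  by move=> A B; rewrite big_split.
rewrite E; apply: ler_sum => u _.
rewrite -mulrDr; apply: ler_wpM2l; first by apply: prodr_ge0 => *; exact: wu0.
rewrite E; apply: ler_sum => v _.
rewrite -mulrDr; apply: ler_wpM2l; first by apply: prodr_ge0 => *; exact: wu0.
rewrite -natrD ler_nat.
apply: leq_trans (LCSgen_add (fun i j => u i == v j) okS).
by rewrite leq_add // (eq_leq (LCSgen_eqM _ _)) // => i j; rewrite !ffunE.
Qed.
Lemma ELg_ge0 (R : realType) k n ok : 0 <= ELg R k n ok.
Proof. by rewrite /ELg mulr_ge0 ?invr_ge0 // sumr_ge0 // => u _; rewrite sumr_ge0. Qed.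

Lemma ELg_le_n (R : realType) k n ok : (0 < k)%N -> ELg R k n ok <= n%:R.
Proof.
move=> k0; rewrite ELg_alt //.
have w0 : forall N (u : {ffun 'I_N -> 'I_k}), 0 <= \prod_i wu R (u i).
  by move=> N u; apply: prodr_ge0 => *; exact: wu0.
apply: le_trans (_ : \sum_(u : {ffun 'I_n -> 'I_k}) (\prod_i wu R (u i)) *
     \sum_(v : {ffun 'I_n -> 'I_k}) (\prod_i wu R (v i)) * n%:R <= _).
  apply: ler_sum => u _; apply: ler_wpM2l => //; apply: ler_sum => v _.
  by apply: ler_wpM2l => //; rewrite ler_nat LCSgen_le_n.
by rewrite -mulr_suml sumprod1 ?wu1 // mul1r -mulr_suml sumprod1 ?wu1 // mul1r.
Qed.

Lemma ELg_mono (R : realType) k n (ok ok' : nat -> nat -> bool) :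
  (forall i j, ok i j -> ok' i j) -> ELg R k n ok <= ELg R k n ok'.
Proof.
move=> H; rewrite /ELg; apply: ler_wpM2l; first by rewrite invr_ge0.
apply: ler_sum => u _; apply: ler_sum => v _; rewrite ler_nat.
exact: LCSgen_mono.
Qed.

Lemma ELg_eq (R : realType) k n (ok ok' : nat -> nat -> bool) :
  (forall i j : 'I_n, ok i j = ok' i j) -> ELg R k n ok = ELg R k n ok'.
Proof.
move=> H; rewrite /ELg; congr (_ * _).
apply: eq_bigr => u _; apply: eq_bigr => v _; by rewrite (LCSgen_eq_ok _ H).
Qed.

Lemma bprob_wb (R : realType) k n (eps : {ffun 'I_n * 'I_n -> bool}) :
  bprob R k eps = \prod_p wb R k (eps p).
Proof. by []. Qed.

Lemma bprob_ge0 (R : realType) k n (eps : {ffun 'I_n * 'I_n -> bool}) :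
  (0 < k)%N -> 0 <= bprob R k eps.
Proof. by move=> k0; rewrite bprob_wb; apply: prodr_ge0 => *; exact: wb0. Qed.

Lemma ELBg_ge0 (R : realType) k n ok : (0 < k)%N -> 0 <= ELBg R k n ok.
Proof. by move=> k0; rewrite /ELBg sumr_ge0 // => e _; rewrite mulr_ge0 ?bprob_ge0. Qed.

Lemma ELBg_le_n (R : realType) k n ok : (0 < k)%N -> ELBg R k n ok <= n%:R.
Proof.
move=> k0; rewrite /ELBg.
apply: le_trans (_ : \sum_(e : {ffun 'I_n * 'I_n -> bool}) bprob R k e * n%:R <= _).
  apply: ler_sum => e _; apply: ler_wpM2l; first exact: bprob_ge0.
  by rewrite ler_nat LCSgen_le_n.
rewrite -mulr_suml.
under eq_bigr do rewrite bprob_wb.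
by rewrite sumprod1 ?wb1 // mul1r.
Qed.

Lemma ELBg_mono (R : realType) k n (ok ok' : nat -> nat -> bool) : (0 < k)%N ->
  (forall i j, ok i j -> ok' i j) -> ELBg R k n ok <= ELBg R k n ok'.
Proof.
move=> k0 H; rewrite /ELBg; apply: ler_sum => e _; apply: ler_wpM2l; first exact: bprob_ge0.
rewrite ler_nat; exact: LCSgen_mono.
Qed.

Lemma ELBg_eq (R : realType) k n (ok ok' : nat -> nat -> bool) :
  (forall i j : 'I_n, ok i j = ok' i j) -> ELBg R k n ok = ELBg R k n ok'.
Proof.
move=> H; rewrite /ELBg; apply: eq_bigr => e _; by rewrite (LCSgen_eq_ok _ H).
Qed.

Lemma ELBg_super (R : realType) k m n ok (k0 : (0 < k)%N)
  (okS : forall i j, ok (m + i)%N (m + j)%N = ok i j) :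
  ELBg R k m ok + ELBg R k n ok <= ELBg R k (m + n) ok.
Proof.
pose g1 := fun p : 'I_m * 'I_m => (lshift n p.1, lshift n p.2).
pose g2 := fun p : 'I_n * 'I_n => (rshift m p.1, rshift m p.2).
have inj1 : injective g1.
  by move=> [a b] [c d] [e1 e2]; congr pair; apply/val_inj; move: e1 e2 => /=; lia.
have inj2 : injective g2.
  by move=> [a b] [c d] [e1 e2]; congr pair; apply/val_inj; move: e1 e2 => /=; lia.
rewrite /ELBg.
under eq_bigr do rewrite bprob_wb.
under [X in _ + X]eq_bigr do rewrite bprob_wb.
under [X in _ <= X]eq_bigr do rewrite bprob_wb.
rewrite -(marg inj1 (wb1 R k) (fun e => (LCSgen (fun i j => e (i, j)) ok)%:R)).
rewrite -(marg inj2 (wb1 R k) (fun e => (LCSgen (fun i j => e (i, j)) ok)%:R)).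
have E : forall (A B : {ffun 'I_(m+n) * 'I_(m+n) -> bool} -> R), \sum_u A u + \sum_u B u = \sum_u (A u + B u).
  by move=> A B; rewrite big_split.
rewrite E; apply: ler_sum => e _.
rewrite -mulrDr; apply: ler_wpM2l; first by apply: prodr_ge0 => *; exact: wb0.
rewrite -natrD ler_nat.
apply: leq_trans (LCSgen_add (fun i j => e (i, j)) okS).
by rewrite leq_add // (eq_leq (LCSgen_eqM _ _)) // => i j; rewrite !ffunE.
Qed.
Lemma band_shift r m i j : band r (m + i)%N (m + j)%N = band r i j.
Proof. by rewrite /band -!addnA !leq_add2l. Qed.

Lemma band_big r n (i j : 'I_n) : (n <= r)%N -> band r i j = true.
Proof.
move=> nr; rewrite /band; apply/andP; split.
  by apply: leq_trans (ltnW (leq_trans (ltn_ord i) nr)) (leq_addl _ _).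
by apply: leq_trans (ltnW (leq_trans (ltn_ord j) nr)) (leq_addl _ _).
Qed.

Unset Implicit Arguments.
Local Open Scope classical_set_scope.
Local Open Scope ring_scope.

Theorem mainTheorem1 (R : realType) (k : nat) (hk : (2 <= k)%N) :
  ((fun r : nat => gammaB_r R k r) @ \oo --> gammaB R k) /\
  ((fun r : nat => gamma_r R k r) @ \oo --> gamma R k).
Proof.
have k0 : (0 < k)%N by apply: leq_trans hk.
split.
  apply: (@limit_r R (fun n => ELBg R k n (fun _ _ => true)) (fun r n => ELBg R k n (band r))).
  - by move=> n; apply: ELBg_ge0.
  - by move=> n; apply: ELBg_le_n.
  - by move=> m n; apply: ELBg_super.
  - by move=> r n; apply: ELBg_ge0.
  - by move=> r m n; apply: ELBg_super => // i j; apply: band_shift.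
  - by move=> r n; apply: ELBg_mono.
  - by move=> r n nr; apply: ELBg_eq => i j; rewrite band_big.
apply: (@limit_r R (fun n => ELg R k n (fun _ _ => true)) (fun r n => ELg R k n (band r))).
- by move=> n; apply: ELg_ge0.
- by move=> n; apply: ELg_le_n.
- by move=> m n; apply: ELg_super.
- by move=> r n; apply: ELg_ge0.
- by move=> r m n; apply: ELg_super => // i j; apply: band_shift.
- by move=> r n; apply: ELg_mono.
- by move=> r n nr; apply: ELg_eq => i j; rewrite band_big.
Qed.
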